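(* Let $\mathcal{C}$ be a binary cyclic code of length $n$ whose generator polynomial $g\in\mathbb{F}_2[X]$, $g\mid X^n-1$, of degree $r$, is a product of distinct irreducible polynomials. Then the burst-covering radius $b$ of $\mathcal{C}$ satisfies \[ b=\max_{f\in\mathcal{F}_r}\Bigl(\min_{k\ge0}\deg\bigl(X^kf \bmod g\bigr)+1\Bigr), \] where $\mathcal{F}_r=\{f\in\mathbb{F}_2[X]:\deg f<r\}$.
   Context: The burst-covering radius of a code $\mathcal{C}\subseteq\mathbb{F}_2^n$ is the least $b$ such that for every $y\in\mathbb{F}_2^n$ there is $c\in\mathcal{C}$ with $\operatorname{supp}(y-c)\subseteq\{i,i+1,\dots,i+b-1\}$ (indices modulo $n$) for some $i$; equivalently, for linear codes, the least $b$ such that every syndrome is a linear combination of $b$ cyclically consecutive columns of a parity-check matrix. Convention: $\deg(0)=-\infty$. *)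

(* Defs.v *)
From HB Require Import structures.
From mathcomp Require Import all_boot all_order all_algebra.
Set Implicit Arguments. Unset Strict Implicit. Unset Printing Implicit Defensive.
Import GRing.Theory.
Local Open Scope ring_scope.

Definition word_poly (n : nat) (c : 'rV['F_2]_n) : {poly 'F_2} :=
  \sum_(i < n) (c ord0 i)%:P * 'X^i.

(* The binary cyclic code of length n generated by g: the ideal <g> of
   F_2[X]/(X^n - 1), viewed as a set of words. *)
Definition cyclic_code (n : nat) (g : {poly 'F_2}) (c : 'rV['F_2]_n) : Prop :=
  exists a : {poly 'F_2}, word_poly c = (a * g) %% ('X^n - 1).

Definition burst_covers (n : nat) (C : 'rV['F_2]_n -> Prop) (b : nat) : Prop :=
  forall y : 'rV['F_2]_n, exists c, C c /\
    exists i : 'I_n, forall j : 'I_n, y ord0 j != c ord0 j ->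
      exists t : nat, (t < b)%N /\ nat_of_ord j = ((nat_of_ord i + t) %% n)%N.

Definition burst_covering_radius (n : nat) (C : 'rV['F_2]_n -> Prop) (b : nat) : Prop :=
  burst_covers C b /\ forall b', burst_covers C b' -> (b <= b')%N.

Definition prod_distinct_irreducibles (g : {poly 'F_2}) : Prop :=
  exists s : seq {poly 'F_2}, uniq s /\ (forall p, p \in s -> irreducible_poly p)
    /\ g = \prod_(p <- s) p.

(* m = min_{k >= 0} (deg(X^k f mod g) + 1), expressed with size = deg + 1
   (size 0 = 0). *)
Definition is_min_deg1 (g f : {poly 'F_2}) (m : nat) : Prop :=
  (exists k : nat, size ((('X^k * f) %% g)%R) = m) /\
  (forall k : nat, (m <= size ((('X^k * f) %% g)%R))%N).

Definition is_max_min_deg1 (g : {poly 'F_2}) (r : nat) (M : nat) : Prop :=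
  (exists f : {poly 'F_2}, (size f <= r)%N /\ is_min_deg1 g f M) /\
  (forall (f : {poly 'F_2}) (m : nat), (size f <= r)%N -> is_min_deg1 g f m -> (m <= M)%N).

(* Main.v *)
Require Import Defs.
From HB Require Import structures.
From mathcomp Require Import all_boot all_order all_algebra.
From Stdlib Require Import Classical.
From mathcomp Require Import ring.
Import GRing.Theory.
Local Open Scope ring_scope.
Set Implicit Arguments.

Lemma eqmod (g p q : {poly 'F_2}) : g %| p - q -> p %% g = q %% g.
Proof.
move=> /modp_eq0P; rewrite modpD modpN => /eqP; rewrite subr_eq0 => /eqP //.
Qed.

Lemma coef_word_lt (n : nat) (c : 'rV['F_2]_n) (j : 'I_n) :
  (word_poly c)`_j = c ord0 j.
Proof.
rewrite /word_poly coef_sum.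
under eq_bigr => i _ do rewrite coefCM coefXn.
rewrite (bigD1 j) //= eqxx mulr1 big1 ?addr0 //.
move=> i /eqP hi; case: eqP; rewrite ?mulr0 //.
by move=> e; case: hi; apply: val_inj.
Qed.

Lemma coef_word_ge (n : nat) (c : 'rV['F_2]_n) k : (n <= k)%N ->
  (word_poly c)`_k = 0.
Proof.
move=> hk; rewrite /word_poly coef_sum big1 // => i _.
rewrite coefCM coefXn; case: eqP; rewrite ?mulr0 // => e.
by move: (ltn_ord i); rewrite -e ltnNge hk.
Qed.

Lemma word_row (n : nat) (p : {poly 'F_2}) : (size p <= n)%N ->
  word_poly (\row_(j < n) p`_j) = p.
Proof.
move=> hs; apply/polyP => k; case: (ltnP k n) => hk.
  by rewrite (coef_word_lt _ (Ordinal hk)) mxE.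
by rewrite coef_word_ge // nth_default // (leq_trans hs).
Qed.

Lemma word_polyB (n : nat) (a b : 'rV['F_2]_n) :
  word_poly (a - b) = word_poly a - word_poly b.
Proof.
rewrite /word_poly -sumrB; apply: eq_bigr => i _.
by rewrite !mxE polyCB mulrBl.
Qed.

Lemma size_word (n : nat) (c : 'rV['F_2]_n) : (size (word_poly c) <= n)%N.
Proof.
apply: (big_ind (fun p : {poly 'F_2} => size p <= n)%N) => //.
  by rewrite size_poly0.
  by move=> x y hx hy; rewrite (leq_trans (size_polyD _ _)) // geq_max hx.
move=> i _; rewrite (leq_trans (size_polyMleq _ _)) // size_polyXn.
by rewrite (leq_trans _ (ltn_ord i)) //; case: (size _ ) (size_polyC_leq1 (c ord0 i)) => [|[]].
Qed.

Lemma dvd_Xpow (g : {poly 'F_2}) n a : g %| 'X^n - 1 -> g %| 'X^a - 'X^(a %% n).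
Proof.
move=> hg; rewrite {1}(divn_eq a n) exprD mulnC exprM.
have -> : forall x y : {poly 'F_2}, x * y - y = (x - 1) * y.
  by move=> x y; rewrite mulrBl mul1r.
apply: dvdp_mulr; apply: (dvdp_trans hg).
have := subrXX ('X^n : {poly 'F_2}) 1 (a %/ n); rewrite expr1n => ->.
exact: dvdp_mulr.
Qed.

Lemma dvd_sum_mod (I : finType) (g : {poly 'F_2}) n (a : I -> 'F_2) (e : I -> nat) :
  g %| 'X^n - 1 ->
  g %| \sum_t (a t)%:P * 'X^(e t) - \sum_t (a t)%:P * 'X^(e t %% n).
Proof.
move=> hg; rewrite -sumrB.
apply: (big_ind (fun p : {poly 'F_2} => g %| p)) => //.
  by move=> x y; apply: dvdp_add.
by move=> t _; rewrite -mulrBr; apply: dvdp_mull; apply: dvd_Xpow.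
Qed.

Lemma size_sum_mon (I : finType) (a : I -> 'F_2) (e : I -> nat) B :
  (forall t, a t != 0 -> (e t < B)%N) ->
  (size (\sum_t (a t)%:P * 'X^(e t))%R <= B)%N.
Proof.
move=> h.
apply: (big_ind (fun p : {poly 'F_2} => size p <= B)%N) => //.
  by rewrite size_poly0.
  by move=> x y hx hy; rewrite (leq_trans (size_polyD _ _)) // geq_max hx.
move=> t _; have [->|nz] := eqVneq (a t) 0; first by rewrite mul0r size_poly0.
by rewrite mul_polyC size_scale // size_polyXn h.
Qed.

Lemma coef_sum_mon (I : finType) (a : I -> 'F_2) (e : I -> nat) j :
  (\sum_t (a t)%:P * 'X^(e t))`_j = \sum_t a t * (j == e t)%:R.
Proof.
by rewrite coef_sum; apply: eq_bigr => t _; rewrite coefCM coefXn.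
Qed.

Lemma coverB n r (g f : {poly 'F_2}) b' : (0 < n)%N -> g %| 'X^n - 1 -> size g = r.+1 ->
  burst_covers (@cyclic_code n g) b' -> (size f <= r)%N ->
  exists k, (size ((('X^k * f) %% g)%R) <= b')%N.
Proof.
move=> n0 hg sg cov sf.
have Xn0 : ('X^n - 1 : {poly 'F_2}) != 0.
  by rewrite -size_poly_eq0 size_Xn_sub_1.
have rn : (r <= n)%N.
  by have := dvdp_leq Xn0 hg; rewrite sg size_Xn_sub_1.
have [c [[a hc] [i hi]]] := cov (\row_(j < n) f`_j).
set e := \row_(j < n) f`_j - c.
have gc : g %| word_poly c.
  by rewrite hc -(dvdp_mod _ hg); apply: dvdp_mull; apply: dvdpp.
exists (n - i)%N.
set P := (\sum_(j < n) (e ord0 j)%:P * 'X^((n - i + j) %% n))%R.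
suff -> : ('X^(n - i) * f) %% g = P %% g.
  apply: leq_trans (leq_modp _ _) _; apply: size_sum_mon => j nz.
  have : (\row_(j < n) f`_j) ord0 j != c ord0 j.
    by apply: contra nz; rewrite /e !mxE => /eqP ->; rewrite subrr.
  move=> /hi [t [tb ->]].
  rewrite modnDmr addnA subnK ?(ltnW (ltn_ord i)) // modnDl.
  exact: leq_ltn_trans (leq_mod t n) tb.
apply: eqmod.
have ef : f = word_poly e + word_poly c.
  by rewrite /e word_polyB word_row ?(leq_trans sf rn) // subrK.
have eQ : 'X^(n - i) * word_poly e = (\sum_(j < n) (e ord0 j)%:P * 'X^(n - i + j))%R.
  rewrite /word_poly mulr_sumr; apply: eq_bigr => j _.
  by rewrite mulrCA exprD.
have -> : 'X^(n - i) * f - P = 'X^(n - i) * word_poly c +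
   ((\sum_(j < n) (e ord0 j)%:P * 'X^(n - i + j))%R - P).
  by rewrite -eQ ef mulrDr addrA (addrC ('X^(n - i) * word_poly c)).
apply: dvdp_add; first exact: dvdp_mull.
rewrite /P; exact: (dvd_sum_mod _ _ _ (fun j : 'I_n => e ord0 j) (fun j : 'I_n => (n - i + j)%N) hg).
Qed.

Lemma coverA n r (g : {poly 'F_2}) b' : (0 < n)%N -> g %| 'X^n - 1 -> size g = r.+1 ->
  (forall f : {poly 'F_2}, (size f <= r)%N -> exists k, (size ((('X^k * f) %% g)%R) <= b')%N) ->
  burst_covers (@cyclic_code n g) b'.
Proof.
move=> n0 hg sg hb y.
have g0 : g != 0 by rewrite -size_poly_eq0 sg.
have Xn0 : ('X^n - 1 : {poly 'F_2}) != 0.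
  by rewrite -size_poly_eq0 size_Xn_sub_1.
have rn : (r <= n)%N.
  by have := dvdp_leq Xn0 hg; rewrite sg size_Xn_sub_1.
set s := word_poly y %% g.
have ss : (size s <= r)%N by rewrite -ltnS -sg ltn_modp.
have [k hk] := hb s ss.
set h := ('X^k * s) %% g.
have sh : (size h <= n)%N by apply: leq_trans rn; rewrite -ltnS -sg ltn_modp.
pose i : 'I_n := Ordinal (ltn_pmod (n - k %% n) n0).
set P := (\sum_(t < n) (h`_t)%:P * 'X^((i + t) %% n))%R.
have sP : (size P <= n)%N by apply: size_sum_mon => t _; exact: ltn_pmod.
set e := \row_(j < n) P`_j.
have we : word_poly e = P by rewrite word_row.
exists (y - e); split.
  have gd : g %| word_poly (y - e).
    rewrite word_polyB we.
    have ik : ((i + k) %% n = 0)%N.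
      rewrite /= modnDml -modnDmr subnK ?modnn //.
      exact: ltnW (ltn_pmod _ n0).
    have hh : h = word_poly (\row_(t < n) h`_t) by rewrite word_row.
    have eQ : 'X^i * h = (\sum_(t < n) (h`_t)%:P * 'X^(i + t))%R.
      rewrite {1}hh /word_poly mulr_sumr; apply: eq_bigr => t _.
      by rewrite mxE mulrCA exprD.
    have -> : word_poly y - P = (word_poly y - s) - ('X^(i + k) - 'X^0) * s
       + 'X^i * ('X^k * s - h) + ('X^i * h - P).
      rewrite expr0 exprD; ring.
    apply: dvdp_add; last first.
      by rewrite eQ /P; exact: (dvd_sum_mod _ _ _ (fun t : 'I_n => h`_t) (fun t : 'I_n => (i + t)%N) hg).
    apply: dvdp_add; last first.
      apply: dvdp_mull; rewrite /h.
      by apply/modp_eq0P; rewrite modpD modpN modp_id subrr.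
    apply: dvdp_sub.
      by apply/modp_eq0P; rewrite modpD modpN modp_id subrr.
    apply: dvdp_mulr; have -> : ('X^0 : {poly 'F_2}) = 'X^((i + k) %% n) by rewrite ik.
    exact: dvd_Xpow.
  exists (word_poly (y - e) %/ g).
  rewrite divpK // modp_small // size_Xn_sub_1 // ltnS; exact: size_word.
exists i => j hj.
apply: NNPP => hno.
have ej : e ord0 j != 0.
  by apply: contra hj; rewrite !mxE => /eqP ->; rewrite subr0.
move: ej; rewrite /e mxE /P coef_sum_mon big1 ?eqxx // => t _.
case: eqP => [jt|]; last by rewrite mulr0.
have [->|nz] := eqVneq (h`_t) 0; first by rewrite mul0r.
exfalso; apply: hno; exists t; split => //.
apply: leq_trans hk; rewrite -/h.
by move: nz; apply: contraNT; rewrite -leqNgt => /(nth_default 0) ->.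
Qed.

Lemma ex_min (P : nat -> Prop) : (exists n, P n) -> exists m, P m /\ forall k, P k -> (m <= k)%N.
Proof.
move=> [n0 Pn].
suff: forall N n, (n <= N)%N -> P n -> exists m, P m /\ forall k, P k -> (m <= k)%N.
  by move=> /(_ n0 n0 (leqnn n0) Pn).
elim=> [|N IH] {}n hn Pn0.
  exists n; split => // k _; move: hn; rewrite leqn0 => /eqP ->; done.
case: (classic (exists k, (k < n)%N /\ P k)) => [[k [kn Pk]]|no].
  by apply: (IH k) => //; rewrite -ltnS (leq_trans kn hn).
exists n; split => // k Pk; rewrite leqNgt; apply/negP => kn.
by apply: no; exists k.
Qed.

Unset Implicit Arguments.

Theorem corollary2 (n r : nat) (g : {poly 'F_2}) (b : nat) :
  (0 < n)%N ->
  g %| ('X^n - 1) ->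
  size g = r.+1 ->
  prod_distinct_irreducibles g ->
  burst_covering_radius (@cyclic_code n g) b <-> is_max_min_deg1 g r b.
Proof.
move=> n0 hg sg _.
have cA := fun b' => @coverA n r g b' n0 hg sg.
have cB := fun f b' => @coverB n r g f b' n0 hg sg.
have minE : forall f : {poly 'F_2}, exists m, is_min_deg1 g f m.
  move=> f; have [m [[k hk] hm]] := ex_min (fun m => exists k, size ((('X^k * f) %% g)%R) = m)
     (ex_intro _ _ (ex_intro _ 0%N erefl)).
  by exists m; split; [exists k | move=> k'; apply: hm; exists k'].
split.
  move=> [cov least]; split; last first.
    move=> f m sf [_ hm]; have [k hk] := cB _ _ cov sf.
    exact: leq_trans (hm k) hk.
  case: b cov least => [|b0] cov least.
    exists 0; split; first by rewrite size_poly0.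
    split; first by exists 0%N; rewrite mulr0 mod0p size_poly0.
    by move=> k.
  have : ~ (forall f : {poly 'F_2}, (size f <= r)%N ->
             exists k, (size ((('X^k * f) %% g)%R) <= b0)%N).
    by move=> /cA /least; rewrite ltnn.
  move=> /not_all_ex_not [f hf].
  have [sf hf'] := imply_to_and _ _ hf.
  have [m [[k hk] hm]] := minE f.
  exists f; split => //.
  have [k' hk'] := cB _ _ cov sf.
  have mb : (m <= b0.+1)%N := leq_trans (hm k') hk'.
  have bm : (b0 < m)%N.
    rewrite ltnNge; apply/negP => mb0; apply: hf'; exists k; by rewrite hk.
  have -> : b0.+1 = m by apply/eqP; rewrite eqn_leq bm mb.
  by split; [exists k | ].
move=> [[f0 [sf0 [_ hf0]]] hmax]; split.
  apply: cA => f sf; have [m [[k hk] hm]] := minE f.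
  exists k; rewrite hk; apply: (hmax f m sf); split; [exists k | ]; done.
move=> b' /cB hb; have [k hk] := hb f0 sf0.
exact: leq_trans (hf0 k) hk.
Qed.
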